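(* Let $n\ge 3$. The cardinality statistic $I\mapsto|I|$ is not homomesic under rowmotion on $\mathcal{IC}([n])$. More precisely, with $[i,j]=\{i,\dots,j\}$: the orbit $\{\emptyset,[n]\}$ has average cardinality $\frac n2$; for each $1\le k<\frac n2$, the orbit of $[1,k]$ (of size $n+2$) has average cardinality $\frac{2k(n-k)+n}{n+2}$; and, when $n$ is even, the orbit of $[1,\frac n2]$ (of size $\frac{n+2}{2}$) has average cardinality $\frac n2$.
   Context: $[n]$ denotes the chain poset $1<2<\cdots<n$. A subset $I\subseteq P$ of a finite poset is interval-closed if for all $x,y\in I$ and $z\in P$ with $x\le z\le y$ we have $z\in I$; $\mathcal{IC}(P)$ is the set of interval-closed subsets. For $x\in P$ the toggle $t_x$ sends $I$ to $I\triangle\{x\}$ if that is interval-closed and to $I$ otherwise. Rowmotion is $\mathrm{Row}=t_{x_1}\circ\cdots\circ t_{x_N}$, where $(x_1,\dots,x_N)$ is a linear extension of $P$ (toggling from the top down). A statistic is homomesic under rowmotion if its average over every rowmotion orbit is the same constant. *)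

(* Defs.v *)
From mathcomp Require Import all_boot all_order all_algebra.
Set Implicit Arguments. Unset Strict Implicit. Unset Printing Implicit Defensive.
Import GRing.Theory Num.Theory.

(* The chain [n] = {1 < ... < n} is modelled by 'I_n, where the ordinal
   x : 'I_n stands for the element x+1 of [n]; the order is the order of nat. *)

Definition interval_closed (n : nat) (I : {set 'I_n}) : bool :=
  [forall x in I, forall y in I, forall z : 'I_n,
     ((x <= z) && (z <= y))%N ==> (z \in I)].

Definition toggle (n : nat) (x : 'I_n) (I : {set 'I_n}) : {set 'I_n} :=
  let J := if x \in I then I :\ x else x |: I in
  if interval_closed J then J else I.

(* Rowmotion: Row = t_{x_1} o ... o t_{x_N} for the (unique) linear extension
   x_1 < ... < x_N of the chain, i.e. toggling from the top down. *)
Definition rowmotion (n : nat) (I : {set 'I_n}) : {set 'I_n} :=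
  foldr (@toggle n) I (enum 'I_n).

Definition row_orbit (n : nat) (I : {set 'I_n}) : seq {set 'I_n} :=
  orbit (@rowmotion n) I.

Definition orbit_avg (n : nat) (f : {set 'I_n} -> nat) (I : {set 'I_n}) : rat :=
  ((\sum_(J <- row_orbit I) f J)%:R / (size (row_orbit I))%:R)%R.

Definition homomesic (n : nat) (f : {set 'I_n} -> nat) : Prop :=
  exists c : rat, forall I : {set 'I_n}, interval_closed I -> orbit_avg f I = c.

Definition ival (n : nat) (i j : nat) : {set 'I_n} :=
  [set x : 'I_n | (i <= x.+1 <= j)%N].

Definition card_stat (n : nat) (I : {set 'I_n}) : nat := #|I|.

(* Main.v *)
Require Import Defs.
From mathcomp Require Import all_boot all_order all_algebra zify.
Import GRing.Theory Num.Theory.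
Set Implicit Arguments. Unset Strict Implicit. Unset Printing Implicit Defensive.

Section S.
Variable n : nat.

Definition iv (a b : nat) : {set 'I_n} := [set x : 'I_n | a <= x <= b].

Lemma iv_empty a b : b < a -> iv a b = set0.
Proof. move=> h; apply/setP=> x; rewrite !inE; lia. Qed.

Lemma iv_ge a b : n <= a -> iv a b = set0.
Proof. move=> h; apply/setP=> x; rewrite !inE; have := ltn_ord x; lia. Qed.

Lemma ic_iv a b : interval_closed (iv a b).
Proof.
apply/forallP=> x; apply/implyP=> hx; apply/forallP=> y; apply/implyP=> hy.
apply/forallP=> z; apply/implyP=> hz; move: hx hy; rewrite !inE; lia.
Qed.

Lemma ic0 : interval_closed (set0 : {set 'I_n}).
Proof. by rewrite -(iv_empty (a:=1) (b:=0)) // ic_iv. Qed.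

Lemma notIC (J : {set 'I_n}) (u v z : 'I_n) : u \in J -> v \in J ->
  (u <= z <= v) -> z \notin J -> ~~ interval_closed J.
Proof.
move=> hu hv hz hzJ; apply/negP=> /forallP/(_ u)/implyP/(_ hu)/forallP/(_ v).
move=>/implyP/(_ hv)/forallP/(_ z)/implyP/(_ hz); by apply/negP.
Qed.

Lemma tog0 (x : 'I_n) : toggle x set0 = iv x x.
Proof.
rewrite /toggle inE.
have -> : x |: set0 = iv x x.
  by apply/setP=> y; rewrite !inE -val_eqE /=; lia.
by rewrite ic_iv.
Qed.

Lemma tog1 (x : 'I_n) a b : a <= b -> b < n ->
  toggle x (iv a b) = if x == b.+1 :> nat then iv a b.+1
    else if x.+1 == a then iv a.-1 b else if x == a :> nat then iv a.+1 b
    else if x == b :> nat then iv a b.-1 else iv a b.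
Proof.
move=> hab hbn; rewrite /toggle.
have ha : a < n by lia.
case hx: (x \in iv a b).
- move: (hx); rewrite inE => hx'.
  have -> : (x == b.+1 :> nat) = false by lia.
  have -> : (x.+1 == a) = false by lia.
  case h1: (nat_of_ord x == a).
    have -> : iv a b :\ x = iv a.+1 b by apply/setP=> y; rewrite !inE -val_eqE /=; lia.
    by rewrite ic_iv.
  case h2: (nat_of_ord x == b).
    have -> : iv a b :\ x = iv a b.-1 by apply/setP=> y; rewrite !inE -val_eqE /=; lia.
    by rewrite ic_iv.
  have H : ~~ interval_closed (iv a b :\ x).
  apply: (@notIC _ (Ordinal ha) (Ordinal hbn) x); rewrite ?inE /=; try lia.
  by rewrite -val_eqE /=; lia.
  by rewrite -val_eqE /=; lia.
  by rewrite eqxx.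
  by rewrite (negbTE H).
- move: (hx); rewrite inE => hx'.
  case h1: (nat_of_ord x == b.+1).
    have -> : x |: iv a b = iv a b.+1 by apply/setP=> y; rewrite !inE -val_eqE /=; lia.
    by rewrite ic_iv.
  case h2: (x.+1 == a).
    have -> : x |: iv a b = iv a.-1 b by apply/setP=> y; rewrite !inE -val_eqE /=; lia.
    by rewrite ic_iv.
  have -> : (x == a :> nat) = false by lia.
  have -> : (x == b :> nat) = false by lia.
  have H : ~~ interval_closed (x |: iv a b); last by rewrite (negbTE H).
  case: (ltnP x a) => hxa.
  + have hz : a.-1 < n by lia.
    apply: (@notIC _ x (Ordinal hbn) (Ordinal hz)); rewrite ?inE /=; try lia.
    by rewrite eqxx.
    by rewrite -val_eqE /=; lia.
  + have hz : b.+1 < n by have := ltn_ord x; lia.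
    apply: (@notIC _ (Ordinal ha) x (Ordinal hz)); rewrite ?inE /=; try lia.
    by rewrite eqxx.
    by rewrite -val_eqE /=; lia.
Qed.


Definition tog' (x : nat) (I : {set 'I_n}) :=
  if insub x is Some o then toggle o I else I.

Lemma row_iota I : rowmotion I = foldr tog' I (iota 0 n).
Proof.
rewrite /rowmotion -val_enum_ord foldr_map.
by elim: (enum 'I_n) => //= o s ->; rewrite /tog' valK.
Qed.

Lemma row_loop (Q : nat -> {set 'I_n} -> Prop) I :
  Q n I -> (forall (o : 'I_n) S, Q o.+1 S -> Q o (toggle o S)) ->
  Q 0 (rowmotion I).
Proof.
move=> Qn Qs.
suff H : forall d, d <= n -> Q (n - d) (foldr tog' I (iota (n - d) d)).
  by rewrite row_iota; have := H n (leqnn n); rewrite subnn.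
elim=> [|d IH] hd; first by rewrite subn0.
have -> : iota (n - d.+1) d.+1 = (n - d.+1) :: iota (n - d) d.
  by rewrite /=; congr (_ :: iota _ _); lia.
rewrite /= /tog'; case: insubP => [o _ ho|]; last by lia.
rewrite -ho; apply: Qs; rewrite ho.
have -> : (n - d.+1).+1 = n - d by lia.
by apply: IH; lia.
Qed.

Lemma row_shift a b : a <= b -> b.+1 < n -> rowmotion (iv a b) = iv a.+1 b.+1.
Proof.
move=> hab hbn.
pose E m := if b.+1 < m then iv a b else if a < m then iv a b.+1 else iv a.+1 b.+1.
apply: (@row_loop (fun m S => S = E m)); first by rewrite /E hbn.
move=> o S ->; rewrite /E.
have ho := ltn_ord o.
case: (ltnP b.+1 o) => h1.
  rewrite ltnS ltnW // tog1 //; try lia.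
  have -> : (nat_of_ord o == b.+1) = false by lia.
  have -> : (o.+1 == a) = false by lia.
  have -> : (nat_of_ord o == a) = false by lia.
  have -> : (nat_of_ord o == b) = false by lia.
  by [].
case: (ltnP b.+1 o.+1) => h2.
  have hob : nat_of_ord o = b.+1 by lia.
  rewrite tog1 //; try lia.
  rewrite hob eqxx; by have -> : a < b.+1 by lia.
case: (ltnP a o) => h3.
  have -> : a < o.+1 by lia.
  rewrite tog1 //; try lia.
  have -> : (nat_of_ord o == b.+2) = false by lia.
  have -> : (o.+1 == a) = false by lia.
  have -> : (nat_of_ord o == a) = false by lia.
  have -> : (nat_of_ord o == b.+1) = false by lia.
  by [].
case: (ltnP a o.+1) => h4.
  have hoa : nat_of_ord o = a by lia.
  rewrite tog1 //; try lia.
  have -> : (nat_of_ord o == b.+2) = false by lia.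
  have -> : (o.+1 == a) = false by lia.
  by rewrite hoa eqxx.
rewrite tog1 //; try lia.
have -> : (nat_of_ord o == b.+2) = false by lia.
have -> : (o.+1 == a.+1) = false by lia.
have -> : (nat_of_ord o == a.+1) = false by lia.
have -> : (nat_of_ord o == b.+1) = false by lia.
by [].
Qed.

Lemma row_top a : a <= n ->
  rowmotion (iv a n.-1) = if a == 0 then set0 else iv 0 a.-1.
Proof.
move=> han.
pose E m := if a < m then iv a m.-1 else if m == a then set0 else iv m a.-1.
have -> : (if a == 0 then set0 else iv 0 a.-1) = E 0 by rewrite /E ltn0 eq_sym.
apply: (@row_loop (fun m S => S = E m)).
  rewrite /E; case: ltnP => h; first by [].
  have hna : n = a by lia.
  by rewrite -hna eqxx iv_ge.
move=> o S ->; rewrite /E.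
have ho := ltn_ord o.
case: (ltnP a o) => h1.
  have -> : a < o.+1 by lia.
  rewrite /= tog1 //; try lia.
  have -> : (nat_of_ord o == o.+1) = false by lia.
  have -> : (o.+1 == a) = false by lia.
  have -> : (nat_of_ord o == a) = false by lia.
  by rewrite eqxx.
case: (ltnP a o.+1) => h2.
  have hoa : nat_of_ord o = a by lia.
  rewrite /= tog1 //; try lia.
  have -> : (nat_of_ord o == o.+1) = false by lia.
  have -> : (o.+1 == a) = false by lia.
  rewrite hoa !eqxx iv_empty //.
case: (eqVneq (o.+1) a) => h3.
  have -> : (nat_of_ord o == a) = false by lia.
  by rewrite tog0 -h3.
have -> : (nat_of_ord o == a) = false by lia.
rewrite tog1 //; try lia.
have -> : (nat_of_ord o == a.-1.+1) = false by lia.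
by rewrite eqxx.
Qed.

End S.

Lemma traject_map (T : Type) (f : T -> T) x L :
  traject f x L = [seq iter i f x | i <- iota 0 L].
Proof.
elim: L => // L IH.
by rewrite trajectSr IH -addn1 iotaD map_cat cats1 add0n.
Qed.

Lemma orbit_explicit (T : finType) (f : T -> T) x L (E : nat -> T) :
  0 < L -> E 0 = x -> (forall i, i.+1 < L -> f (E i) = E i.+1) -> f (E L.-1) = x ->
  (forall i j, i < L -> j < L -> E i = E j -> i = j) ->
  orbit f x = [seq E i | i <- iota 0 L].
Proof.
move=> L0 E0 Ef EL Einj.
have Hit : forall i, i < L -> iter i f x = E i.
  elim=> [|i IH] hi; first by rewrite E0.
  by rewrite iterS IH ?Ef //; lia.
have Hp : traject f x L = [seq E i | i <- iota 0 L].
  rewrite traject_map; apply/eq_in_map => i; rewrite mem_iota => hi.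
  by apply: Hit; lia.
have Up : uniq (traject f x L).
  rewrite Hp map_inj_in_uniq ?iota_uniq // => i j; rewrite !mem_iota => hi hj.
  by apply: Einj; lia.
case: L L0 Ef Einj EL Hp Up Hit => // m _ _ _ EL Hp Up Hit.
have Cp : fcycle f (traject f x m.+1).
  have h : iter m f (f x) = x by rewrite -iterSr iterS Hit.
  rewrite trajectS /= -{3}h -trajectSr.
  exact: fpath_traject.
have xp : x \in traject f x m.+1 by rewrite trajectS mem_head.
rewrite (orbitE Cp Up xp) trajectS /= eqxx rot0 -trajectS.
exact: Hp.
Qed.

Section T.
Variable n : nat.

Lemma iv_inj a b c d : a <= b -> b < n -> c <= d -> d < n ->
  iv n a b = iv n c d -> a = c /\ b = d.
Proof.
move=> hab hbn hcd hdn E.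
have ha : a < n by lia.
have hc : c < n by lia.
have h1 : Ordinal ha \in iv n c d by rewrite -E inE /=; lia.
have h2 : Ordinal hc \in iv n a b by rewrite E inE /=; lia.
have h3 : Ordinal hbn \in iv n c d by rewrite -E inE /=; lia.
have h4 : Ordinal hdn \in iv n a b by rewrite E inE /=; lia.
move: h1 h2 h3 h4; rewrite !inE /=; lia.
Qed.

Lemma card_iv a b : a <= b -> b < n -> #|iv n a b| = b.+1 - a.
Proof.
move=> hab hbn.
rewrite cardsE cardE /enum_mem size_filter.
have -> : count (mem [pred x : 'I_n | a <= x <= b]) (Finite.enum 'I_n)
        = count (fun i => a <= i <= b) (map val (enum 'I_n)).
  by rewrite count_map enumT.
rewrite val_enum_ord.
have -> : n = a + (b.+1 - a) + (n - b.+1) by lia.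
rewrite !iotaD !count_cat !add0n.
rewrite (@eq_in_count _ _ pred0); last by move=> i; rewrite mem_iota /=; lia.
rewrite (@eq_in_count _ _ predT (iota a _)); last by move=> i; rewrite mem_iota /=; lia.
rewrite (@eq_in_count _ _ pred0 (iota (a + _) _)); last by move=> i; rewrite mem_iota /=; lia.
by rewrite !count_pred0 count_predT size_iota; lia.
Qed.

Lemma ival_iv k : 1 <= k -> ival n 1 k = iv n 0 k.-1.
Proof. by move=> hk; apply/setP=> x; rewrite !inE; lia. Qed.

End T.

Lemma cross (F : fieldType) (a b c d : F) : (b != 0)%R -> (d != 0)%R ->
  (a / b = c / d -> a * d = c * b)%R.
Proof.
move=> hb hd h.
by rewrite -(mulfVK hb a) h -{2}(mulfVK hd c) mulrAC.
Qed.

Lemma sum_split L m k1 k2 : m <= L ->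
  \sum_(0 <= i < L) (if i < m then k1 else k2) = m * k1 + (L - m) * k2.
Proof.
move=> hm.
rewrite (@big_cat_nat _ _ _ m 0 L _ _ (leq0n m) hm) /=.
rewrite (@eq_big_nat _ _ _ 0 m _ (fun _ => k1)); last by move=> i /andP[_ ->].
rewrite (@eq_big_nat _ _ _ m L _ (fun _ => k2)); last first.
  by move=> i /andP[h _]; rewrite ltnNge h.
by rewrite !sum_nat_const_nat subn0.
Qed.
Section K.
Variables (n k : nat).
Hypotheses (hk : 1 <= k) (h2 : k.*2 <= n).

Definition A i := if i <= n - k then i else i - (n - k).+1.
Definition B i := if i <= n - k then i + k.-1 else i - (n - k).+1 + (n - k).-1.
Definition Ek i := iv n (A i) (B i).
Definition Lk := if k.*2 == n then k.+1 else n.+2.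

Lemma AB_bound i : i < Lk -> A i <= B i < n.
Proof.
rewrite /Lk /A /B => hi.
case: (leqP i (n - k)) => h; case: eqP hi => he hi; lia.
Qed.

Lemma orbit_k : row_orbit (ival n 1 k) = [seq Ek i | i <- iota 0 Lk].
Proof.
have hn : 0 < n by lia.
apply: orbit_explicit.
- rewrite /Lk; case: eqP => //.
- by rewrite /Ek /A /B leq0n add0n ival_iv.
- move=> i hi.
  have hb := AB_bound (ltnW hi).
  have hb' := AB_bound hi.
  rewrite /Ek.
  case: (ltnP i (n - k)) => h.
    have e1 : A i = i by rewrite /A ifT; lia.
    have e2 : B i = i + k.-1 by rewrite /B ifT; lia.
    have e3 : A i.+1 = i.+1 by rewrite /A ifT; lia.
    have e4 : B i.+1 = i.+1 + k.-1 by rewrite /B ifT; lia.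
    rewrite e1 e2 e3 e4 row_shift; try lia.
    by congr iv; lia.
  case: (eqVneq i (n - k)) => h'.
    have e1 : A i = n - k by rewrite /A ifT; lia.
    have e2 : B i = n.-1 by rewrite /B ifT; lia.
    have e3 : A i.+1 = 0 by rewrite /A ifF; lia.
    have e4 : B i.+1 = (n - k).-1 by rewrite /B ifF; lia.
    rewrite e1 e2 e3 e4 row_top; last by lia.
    by have -> : (n - k == 0) = false by lia.
  have e1 : A i = i - (n - k).+1 by rewrite /A ifF; lia.
  have e2 : B i = i - (n - k).+1 + (n - k).-1 by rewrite /B ifF; lia.
  have e3 : A i.+1 = i.+1 - (n - k).+1 by rewrite /A ifF; lia.
  have e4 : B i.+1 = i.+1 - (n - k).+1 + (n - k).-1 by rewrite /B ifF; lia.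
  rewrite -/(A i) in hb'.
  rewrite e1 e2 e3 e4 row_shift; try lia.
  by congr iv; lia.
- rewrite /Ek ival_iv //.
  have hL : Lk.-1 < Lk by rewrite /Lk; case: eqP.
  have hb := AB_bound hL.
  have [e1 e2] : A Lk.-1 = k /\ B Lk.-1 = n.-1.
    rewrite /A /B /Lk; case: eqP => he.
      by rewrite !ifT; try lia; split; lia.
    by rewrite !ifF; try lia; split; lia.
  rewrite e1 e2 row_top; last by lia.
  by have -> : (k == 0) = false by lia.
- move=> i j hi hj; rewrite /Ek => E.
  have hbi := AB_bound hi; have hbj := AB_bound hj.
  have [ea eb] := iv_inj (proj1 (andP hbi)) (proj2 (andP hbi))
                         (proj1 (andP hbj)) (proj2 (andP hbj)) E.
  move: ea eb hi hj; rewrite /A /B /Lk.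
  case: eqP => he; case: (leqP i (n - k)); case: (leqP j (n - k)); lia.
Qed.

Lemma card_Ek i : i < Lk -> #|Ek i| = if i < (n - k).+1 then k else n - k.
Proof.
move=> hi; have hb := AB_bound hi.
rewrite /Ek card_iv; try lia.
move: hb; rewrite /A /B ltnS; case: ifP => h hb; lia.
Qed.

Lemma sum_k : \sum_(J <- row_orbit (ival n 1 k)) #|J|
  = (n - k).+1 * k + (Lk - (n - k).+1) * (n - k).
Proof.
rewrite orbit_k big_map -sum_split; last by rewrite /Lk; case: eqP; lia.
rewrite /index_iota subn0 big_seq [in RHS]big_seq.
by apply: eq_bigr => i; rewrite mem_iota => hi; apply: card_Ek; lia.
Qed.

Lemma size_k : size (row_orbit (ival n 1 k)) = Lk.
Proof. by rewrite orbit_k size_map size_iota. Qed.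

End K.
Lemma setT_iv n : 0 < n -> [set: 'I_n] = iv n 0 n.-1.
Proof. by move=> hn; apply/setP=> x; rewrite !inE; have := ltn_ord x; lia. Qed.

Lemma orbit0 n : 0 < n -> row_orbit (set0 : {set 'I_n}) = [:: set0; setT].
Proof.
move=> hn.
have r0 : rowmotion (set0 : {set 'I_n}) = setT.
  rewrite -(@iv_ge n n n.-1) // row_top // (setT_iv hn).
  by have -> : (n == 0) = false by lia.
have rT : rowmotion [set: 'I_n] = set0 by rewrite (setT_iv hn) row_top.
rewrite /row_orbit (@orbit_explicit _ _ _ 2 (fun i => if i == 0 then set0 else setT)) //.
- by move=> [|i] //= _; rewrite r0.
- move=> [|[|i]] [|[|j]] //= _ _ /setP/(_ (Ordinal hn)); by rewrite !inE.
Qed.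

Lemma avg0 n : 0 < n -> orbit_avg (@card_stat n) set0 = (n%:R / 2%:R)%R.
Proof.
move=> hn; rewrite /orbit_avg orbit0 // !big_cons big_nil /card_stat cards0 cardsT card_ord.
by rewrite add0n addn0.
Qed.

Lemma avgk n k : 1 <= k -> k.*2 < n ->
  size (row_orbit (ival n 1 k)) = n.+2 /\
  orbit_avg (@card_stat n) (ival n 1 k)
       = ((2 * k * (n - k) + n)%N%:R / (n + 2)%N%:R)%R.
Proof.
move=> hk hkn.
have hL : Lk n k = n.+2 by rewrite /Lk; have -> : (k.*2 == n) = false by lia.
split; first by rewrite size_k ?hL //; lia.
rewrite /orbit_avg /card_stat sum_k ?size_k ?hL; try lia.
suff -> : (n - k).+1 * k + (n.+2 - (n - k).+1) * (n - k) = 2 * k * (n - k) + n.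
  by rewrite addn2.
have -> : n = k + (n - k) by lia.
set m := n - k.
have -> : k + m - k = m by lia.
have -> : (k + m).+2 - m.+1 = k.+1 by lia.
nia.
Qed.

Lemma avgeven n : 3 <= n -> ~~ odd n ->
  size (row_orbit (ival n 1 n./2)) = (n + 2)./2 /\
  orbit_avg (@card_stat n) (ival n 1 n./2) = (n%:R / 2%:R)%R.
Proof.
move=> hn hodd.
have hnk : n = (n./2).*2 by rewrite -{1}(odd_double_half n) (negbTE hodd).
set k := n./2 in hnk *.
have hk : 1 <= k by lia.
have hL : Lk n k = k.+1 by rewrite /Lk -hnk eqxx.
split; first by rewrite size_k ?hL; lia.
rewrite /orbit_avg /card_stat sum_k ?size_k ?hL; try lia.
have -> : (n - k).+1 * k + (k.+1 - (n - k).+1) * (n - k) = k * k.+1 by nia.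
rewrite natrM mulfK; last by rewrite pnatr_eq0.
by rewrite hnk -muln2 natrM mulfK // pnatr_eq0.
Qed.

Theorem proposition3p14 (n : nat) (hn : (3 <= n)%N) :
  ~ homomesic (@card_stat n) /\
  (row_orbit (set0 : {set 'I_n}) = [:: set0; setT] /\
   orbit_avg (@card_stat n) set0 = (n%:R / 2%:R)%R) /\
  (forall k : nat, (1 <= k)%N -> (k.*2 < n)%N ->
     size (row_orbit (ival n 1 k)) = n.+2 /\
     orbit_avg (@card_stat n) (ival n 1 k)
       = ((2 * k * (n - k) + n)%N%:R / (n + 2)%N%:R)%R) /\
  (~~ odd n ->
     size (row_orbit (ival n 1 n./2)) = (n + 2)./2 /\
     orbit_avg (@card_stat n) (ival n 1 n./2) = (n%:R / 2%:R)%R).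
Proof.
have hn0 : 0 < n by lia.
split; last first.
  split; first by split; [exact: orbit0 | exact: avg0].
  split; first exact: avgk.
  exact: avgeven.
move=> [c Hc].
have e0 := Hc set0 (ic0 n).
have ic1 : interval_closed (ival n 1 1) by rewrite ival_iv // ic_iv.
have e1 := Hc (ival n 1 1) ic1.
rewrite avg0 // in e0.
have h12 : (1.*2 < n)%N by rewrite /=; lia.
rewrite (proj2 (avgk (leqnn 1) h12)) in e1.
rewrite -e1 in e0.
have hb : (2%:R : rat) != 0%R by rewrite pnatr_eq0.
have hd : ((n + 2)%N%:R : rat) != 0%R by rewrite pnatr_eq0 addn2.
have := cross hb hd e0; rewrite -!natrM => /eqP; rewrite eqr_nat => /eqP; nia.
Qed.
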